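(* Let $(\Delta,R)$ be a gentle quiver such that $f_{(\Delta,R)} = m'\cdot[0,3]+[p+m'+2,\,p]$ for some $m',p\in\mathbb N$, and let $m$ be the number of $3$-cycles in $\Delta$. Then \[ f_{(\Delta,R)} = m\cdot[0,3] + [\,|\Delta_0|+1-m,\; |\Delta_0|-1-2m\,]. \]
   Context: A quiver $\Delta$ has finite vertex set $\Delta_0$, arrow set $\Delta_1$, maps $s,t$. A path of length $n\ge1$ is $(\alpha_1,\dots,\alpha_n)$ with $s\alpha_i=t\alpha_{i+1}$. A $3$-cycle in $\Delta$ is a sequence $(\alpha_0,\alpha_1,\alpha_2)$ of arrows with $\alpha_0\ne\alpha_1\ne\alpha_2\ne\alpha_0$ such that $(\alpha_0,\alpha_1,\alpha_2,\alpha_0)$ is a path; 3-cycles differing by a cyclic permutation are identified. A gentle quiver is $(\Delta,R)$ with $\Delta$ connected, $R$ a set of paths of length 2, such that: (1) each vertex is start of at most two arrows and end of at most two arrows; (2) for each arrow $\alpha$ at most one $\beta$ with $s\beta=t\alpha$, $(\beta,\alpha)\notin R$ and at most one $\gamma$ with $t\gamma=s\alpha$, $(\alpha,\gamma)\notin R$; (3) for each $\alpha$ at most one $\beta$ with $(\beta,\alpha)\in R$ and at most one $\gamma$ with $(\alpha,\gamma)\in R$; (4) for some $n$ every path of length $n$ has a subpath in $R$. Invariant $f_{(\Delta,R)}:\mathbb N^2\to\mathbb N$: choose $\sigma,\tau:\Delta_1\to\{\pm1\}$ with distinct arrows of same start having opposite $\sigma$, distinct arrows of same end opposite $\tau$,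 and for $s\alpha=t\beta$: $(\alpha,\beta)\in R$ iff $\sigma\alpha=\tau\beta$; $\sigma\omega=\sigma\alpha_n,\tau\omega=\tau\alpha_1$. Permitted paths: no consecutive pair in $R$, plus trivial $1_{x,\varepsilon}$ ($s=t=x$, $\sigma=\varepsilon,\tau=-\varepsilon$); maximal if no arrow $\alpha$ with $s\alpha=t\omega,\sigma\alpha=-\tau\omega$ and no $\beta$ with $t\beta=s\omega,\tau\beta=-\sigma\omega$; set $\mathcal M$. Antipaths: all consecutive pairs in $R$, plus trivial $1'_{x,\varepsilon}$ ($\sigma=\tau=\varepsilon$); maximal if no $\alpha$ with $s\alpha=t\omega,\sigma\alpha=\tau\omega$ and no $\beta$ with $t\beta=s\omega,\tau\beta=\sigma\omega$; set $\mathcal N$. $\phi:\mathcal M\to\mathcal N$, $\omega\mapsto$ unique $\omega'$ with $t\omega'=t\omega,\tau\omega'=-\tau\omega$; $\psi:\mathcal N\to\mathcal M$, $\omega\mapsto$ unique $\omega'$ with $s\omega'=s\omega,\sigma\omega'=-\sigma\omega$; $\Phi=\phi\psi$; $\Phi$-orbit: $p=|\mathcal O|$, $q=$ total length. $\mathcal C$: arrows $\alpha$ with $(\alpha)$ not a subpath of a maximal antipath; $\Psi(\alpha)=$ unique $\beta\in\mathcal C$ with $t\beta=s\alpha,\tau\beta=\sigma\alpha$; $\Psi$-orbit: $p=0$, $q=|\mathcal O|$. $f(p,q)=$ number of orbits with these values. $[p,q]$ is the characteristic function of $\{(p,q)\}$; sums pointwise. *)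

(* Defs.v *)
From mathcomp Require Import all_boot.
Set Implicit Arguments. Unset Strict Implicit. Unset Printing Implicit Defensive.

Section Gentle.
Variables (V A : finType) (s t : A -> V) (R : rel A).

(* A path (a_1,...,a_n) is stored as its first arrow a_1 and the rest;
   consecutive arrows satisfy s a_i = t a_(i+1).  R a b means (a,b) in R. *)
Definition arrow_path (a : A) (r : seq A) := path (fun x y => s x == t y) a r.

Definition adj : rel V :=
  fun x y => [exists a, ((s a == x) && (t a == y)) || ((s a == y) && (t a == x))].

Definition connected_quiver := 0 < #|V| /\ forall x y, connect adj x y.

Definition gentle : Prop :=
  (forall a b, R a b -> s a = t b) /\
  [/\ connected_quiver,
      (forall x, #|[set a | s a == x]| <= 2 /\ #|[set a | t a == x]| <= 2),
      (forall a, #|[set b | (s b == t a) && ~~ R b a]| <= 1 /\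
                 #|[set c | (t c == s a) && ~~ R a c]| <= 1),
      (forall a, #|[set b | R b a]| <= 1 /\ #|[set c | R a c]| <= 1) &
      (exists n, forall a r, size r = n -> arrow_path a r ->
                    ~~ path (fun x y => ~~ R x y) a r)].

(* 3-cycles, identified up to cyclic permutation *)
Definition is3cycle (c : A * A * A) : bool :=
  let '(a0, a1, a2) := c in
  [&& a0 != a1, a1 != a2, a2 != a0, s a0 == t a1, s a1 == t a2 & s a2 == t a0].
Definition rot3 (c : A * A * A) : A * A * A := let '(a0, a1, a2) := c in (a1, a2, a0).
Definition rotclass (c : A * A * A) : {set A * A * A} := [set c; rot3 c; rot3 (rot3 c)].
Definition n3cycles : nat := #|[set rotclass c | c in [set c | is3cycle c]]|.

(* Signs: true = +1, false = -1. *)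
Variables (sigma tau : A -> bool).

Definition sign_ok : Prop :=
  [/\ (forall a b, a != b -> s a = s b -> sigma a != sigma b),
      (forall a b, a != b -> t a = t b -> tau a != tau b) &
      (forall a b, s a = t b -> R a b = (sigma a == tau b))].

Fixpoint allseq (n : nat) : seq (seq A) :=
  if n is n'.+1 then [::] :: [seq a :: w | a <- enum A, w <- allseq n'] else [:: [::]].

(* Generalized paths: trivial ones (x, eps), or nontrivial ones of length
   <= #|A| (first arrow, remaining arrows).  Maximal permitted paths and
   maximal antipaths of a gentle quiver have length <= #|A|. *)
Definition rest := seq_sub (allseq #|A|.-1).
Definition gp := ((V * bool) + (A * rest))%type.

Definition arrs (w : gp) : seq A :=
  match w with inl _ => [::] | inr (a, r) => a :: ssval r end.
Definition gsrc (w : gp) : V :=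
  match w with inl (x, _) => x | inr (a, r) => s (last a (ssval r)) end.
Definition gtgt (w : gp) : V :=
  match w with inl (x, _) => x | inr (a, _) => t a end.
(* sigma/tau of permitted paths (trivial: 1_{x,e}, sigma = e, tau = -e) *)
Definition sgP (w : gp) : bool :=
  match w with inl (_, e) => e | inr (a, r) => sigma (last a (ssval r)) end.
Definition tauP (w : gp) : bool :=
  match w with inl (_, e) => ~~ e | inr (a, _) => tau a end.
(* sigma/tau of antipaths (trivial: 1'_{x,e}, sigma = tau = e) *)
Definition sgN (w : gp) : bool :=
  match w with inl (_, e) => e | inr (a, r) => sigma (last a (ssval r)) end.
Definition tauN (w : gp) : bool :=
  match w with inl (_, e) => e | inr (a, _) => tau a end.

Definition permitted (w : gp) : bool :=
  match w with
  | inl _ => true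
  | inr (a, r) => arrow_path a (ssval r) && path (fun x y => ~~ R x y) a (ssval r)
  end.
Definition antipath (w : gp) : bool :=
  match w with
  | inl _ => true
  | inr (a, r) => arrow_path a (ssval r) && path R a (ssval r)
  end.

Definition maxM (w : gp) : bool :=
  [&& permitted w,
      [forall a, ~~ ((s a == gtgt w) && (sigma a == ~~ tauP w))] &
      [forall b, ~~ ((t b == gsrc w) && (tau b == ~~ sgP w))]].
Definition maxN (w : gp) : bool :=
  [&& antipath w,
      [forall a, ~~ ((s a == gtgt w) && (sigma a == tauN w))] &
      [forall b, ~~ ((t b == gsrc w) && (tau b == sgN w))]].

Definition phi (w : gp) : gp :=
  odflt w [pick w' | maxN w' && (gtgt w' == gtgt w) && (tauN w' == ~~ tauP w)].
Definition psi (w : gp) : gp :=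
  odflt w [pick w' | maxM w' && (gsrc w' == gsrc w) && (sgP w' == ~~ sgN w)].
Definition Phi (w : gp) : gp := phi (psi w).

Definition PhiOrbits : {set {set gp}} :=
  [set [set x in orbit Phi w] | w in [set w | maxN w]].
Definition orbit_length (O : {set gp}) : nat := \sum_(w in O) size (arrs w).

Definition Cset : {set A} := [set a | ~~ [exists w, maxN w && (a \in arrs w)]].
Definition Psi (a : A) : A :=
  odflt a [pick b in Cset | (t b == s a) && (tau b == sigma a)].
Definition PsiOrbits : {set {set A}} := [set [set x in orbit Psi a] | a in Cset].

Definition fAG (p q : nat) : nat :=
  #|[set O in PhiOrbits | (#|O| == p) && (orbit_length O == q)]|
  + (p == 0) * #|[set O in PsiOrbits | #|O| == q]|.

End Gentle.

(* characteristic function [a,b] of {(a,b)} *)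
Definition chr (a b : nat) (x y : nat) : nat := ((x == a) && (y == b) : nat).

(* Main.v *)
Require Import Defs.
From mathcomp Require Import all_boot zify.
Set Implicit Arguments. Unset Strict Implicit. Unset Printing Implicit Defensive.

Section Chains.
Variable T : finType.
Variable e : rel T.

Lemma path_pred x l y : path e x l -> y \in l -> exists2 w, w \in belast x l & e w y.
Proof.
elim: l x => [|a l IH] x //= /andP[exa pl]; rewrite inE => /orP[/eqP->|yl].
  by exists x; rewrite ?inE ?eqxx.
by have [w wb ewy] := IH a pl yl; exists w; rewrite // inE wb orbT.
Qed.

Hypothesis efun : forall x y z, e x y -> e x z -> y = z.

Lemma chain_unique x l1 l2 : path e x l1 -> path e x l2 ->
  (forall y, ~~ e (last x l1) y) -> (forall y, ~~ e (last x l2) y) -> l1 = l2.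
Proof.
elim: l1 x l2 => [|a l1 IH] x [|b l2] //=.
- by move=> _ /andP[exb _] /(_ b); rewrite exb.
- by move=> /andP[exa _] _ _ /(_ a); rewrite exa.
move=> /andP[exa p1] /andP[exb p2] m1 m2.
have ab := efun exa exb; subst b.
by rewrite (IH a l2).
Qed.

Hypothesis einj : forall x y z, e x z -> e y z -> x = y.

Lemma chain_exists x0 : (forall y, ~~ e y x0) ->
  exists l, [/\ path e x0 l, uniq (x0 :: l) & forall y, ~~ e (last x0 l) y].
Proof.
move=> nopred.
suff H : forall n, (exists l, [/\ path e x0 l, uniq (x0 :: l) & forall y, ~~ e (last x0 l) y])
   \/ exists l, [/\ path e x0 l, uniq (x0 :: l) & size l = n].
  case: (H #|T|) => // -[l [_ ul sl]].
  move/card_uniqP: ul; have := max_card (mem (x0 :: l)).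
  by move=> h1 h2; move: h1; rewrite h2 /= sl ltnn.
elim=> [|n [IH|[l [pl ul sl]]]]; [right; exists [::]; by [] | by left |].
case: (pickP (e (last x0 l))) => [y ey|none]; last first.
  by left; exists l; split => // y; rewrite none.
right; exists (rcons l y); split.
- by rewrite rcons_path pl /=.
- rewrite -rcons_cons rcons_uniq ul andbT; apply/negP => yin.
  have lz : last x0 l \notin belast x0 l.
    by move: ul; rewrite lastI rcons_uniq => /andP[].
  move: yin; rewrite inE => /orP[/eqP yx|yl].
    by move: (nopred (last x0 l)); rewrite yx in ey; rewrite ey.
  have [w wb ewy] := path_pred pl yl.
  by move: lz; rewrite -(einj ewy ey) wb.
- by rewrite size_rcons sl.
Qed.
End Chains.

Section Graph.
Variables (V A : finType) (s t : A -> V).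

Definition adjE (E : {set A}) : rel V :=
  fun x y => [exists a in E, ((s a == x) && (t a == y)) || ((s a == y) && (t a == x))].

Lemma adjE_sym (E : {set A}) : symmetric (adjE E).
Proof.
move=> x y; apply/existsP/existsP => -[a /andP[aE h]]; exists a; rewrite aE /=;
  by rewrite orbC.
Qed.

Lemma adjE_arrow (E : {set A}) a : a \in E -> adjE E (s a) (t a).
Proof. by move=> aE; apply/existsP; exists a; rewrite aE !eqxx. Qed.

Lemma crossing (E : {set A}) (S : {set V}) x p : path (adjE E) x p -> x \in S -> last x p \notin S ->
  exists2 a : A, a \in E & ((s a \in S) != (t a \in S)).
Proof.
elim: p x => [|y p IH] x /=; first by move=> _ ->.
move=> /andP[axy pp] xS.
case yS: (y \in S); first exact: IH.
move=> _; move: axy => /existsP[a /andP[aE /orP[]/andP[/eqP sa /eqP ta]]];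
  by exists a => //; rewrite sa ta xS yS.
Qed.

Lemma conn_edges (E : {set A}) : (forall x y, connect (adjE E) x y) -> 0 < #|V| ->
  #|V| <= #|E| + 1.
Proof.
move=> conn Vpos.
have [r _] : exists r : V, true.
  by case: (pickP (@predT V)) => [r _|h]; [exists r | move: Vpos; rewrite eq_card0].
suff H : forall n, n < #|V| -> exists S : {set V},
   #|S| = n.+1 /\ n <= #|[set a in E | (s a \in S) && (t a \in S)]|.
  have [|S [_ h]] := H #|V|.-1; first by rewrite prednK.
  rewrite -(prednK Vpos) addn1 ltnS (leq_trans h) // subset_leq_card //.
  by apply/subsetP => a; rewrite inE => /andP[].
elim=> [_|n IH lt]; first by exists [set r]; rewrite cards1.
have [S [cS hS]] := IH (ltnW lt).
have [y yS] : exists y, y \notin S.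
  apply/existsP; move: lt; apply: contraLR => /existsPn allin.
  rewrite -leqNgt -cS -cardsT subset_leq_card //; apply/subsetP => z _.
  by move: (allin z); rewrite negbK.
have [x xS] : exists x, x \in S.
  by case: (pickP (mem S)) => [x xS|h]; [exists x | move: cS; rewrite eq_card0].
have [q pq ly] := connectP (conn x y).
have [|a aE cr] := crossing pq xS; first by rewrite -ly.
have [v [vS av]] : exists v, v \notin S /\ ((s a == v) && (t a \in S) || (t a == v) && (s a \in S)).
  by move: cr; case sS: (s a \in S); case tS: (t a \in S) => //= _;
    [exists (t a) | exists (s a)]; rewrite ?sS ?tS ?eqxx ?orbT.
exists (v |: S); split; first by rewrite cardsU1 vS cS.
have aout : a \notin [set a in E | (s a \in S) && (t a \in S)].
  by move: cr; rewrite inE aE /=; case: (s a \in S); case: (t a \in S).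
apply: leq_trans (_ : #|a |: [set a in E | (s a \in S) && (t a \in S)]| <= _).
  by rewrite cardsU1 aout add1n ltnS.
apply: subset_leq_card; apply/subsetP => b; rewrite !inE => /orP[/eqP->|/andP[bE /andP[sb tb]]].
  rewrite aE /=; case/orP: av => /andP[/eqP-> ->]; by rewrite eqxx ?orbT.
by rewrite bE sb tb !orbT.
Qed.
End Graph.

Lemma conn_bypass (V A : finType) (s t : A -> V) (E : {set A}) :
  (forall x y, connect (adj s t) x y) -> (forall a, connect (adjE s t E) (s a) (t a)) ->
  forall x y, connect (adjE s t E) x y.
Proof.
move=> c h x y; apply: (connect_sub _ (c x y)) => u v /existsP[a /orP[]/andP[/eqP<- /eqP<-]].
  exact: h.
by rewrite (sym_connect_sym (@adjE_sym _ _ s t E)).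
Qed.

Lemma card_bigcup_le (T I : finType) (P : pred I) (F : I -> {set T}) :
  #|\bigcup_(i | P i) F i| <= \sum_(i | P i) #|F i|.
Proof.
elim/big_rec2: _ => [|i U n _ IH]; first by rewrite cards0.
by rewrite (leq_trans (leq_card_setU _ _)) // leq_add2l.
Qed.

Section Main.
Variables (V A : finType) (s t : A -> V) (R : rel A) (sigma tau : A -> bool).
Hypothesis S1 : forall a b, a != b -> s a = s b -> sigma a != sigma b.
Hypothesis S2 : forall a b, a != b -> t a = t b -> tau a != tau b.
Hypothesis S3 : forall a b, s a = t b -> R a b = (sigma a == tau b).

Local Notation maxN' := (maxN s t R sigma tau).
Local Notation maxM' := (maxM s t R sigma tau).
Local Notation Phi' := (Phi s t R sigma tau).
Local Notation Psi' := (Psi s t R sigma tau).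
Local Notation C' := (Cset s t R sigma tau).

Lemma sinj a b : s a = s b -> sigma a = sigma b -> a = b.
Proof. by move=> h1 h2; case: (eqVneq a b) => // /S1/(_ h1); rewrite h2 eqxx. Qed.
Lemma tinj a b : t a = t b -> tau a = tau b -> a = b.
Proof. by move=> h1 h2; case: (eqVneq a b) => // /S2/(_ h1); rewrite h2 eqxx. Qed.

Lemma allseq_mem n (l : seq A) : size l <= n -> l \in allseq A n.
Proof.
elim: n l => [|n IH] [|a l] //= h.
by rewrite inE; apply/orP; right; apply: allpairs_f; rewrite ?mem_enum ?IH.
Qed.

Lemma uniq_size (a : A) l : uniq (a :: l) -> size l <= #|A|.-1.
Proof.
move/card_uniqP => h; have := max_card (mem (a :: l)); rewrite h /=.
by case: #|A|.
Qed.

Lemma maxN_exists_tgt v e : (forall a, ~~ ((s a == v) && (sigma a == e))) ->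
  exists w : gp V A, [&& maxN' w, gtgt t w == v & tauN tau w == e].
Proof.
move=> free.
case: (pickP (fun b => (t b == v) && (tau b == e))) => [b /andP[/eqP tb /eqP eb]|none]; last first.
  exists (inl (v, e)); rewrite /maxN /= !eqxx !andbT.
  by apply/andP; split; apply/forallP => b; [exact: free | move: (none b) => /= ->].
pose e' := fun x y => (t y == s x) && (tau y == sigma x).
have ei : forall x y z, e' x z -> e' y z -> x = y.
  by move=> x y z /andP[/eqP h1 /eqP h2] /andP[/eqP h3 /eqP h4]; apply: sinj; rewrite -?h1 -?h2 -?h3 -?h4.
have np : forall y, ~~ e' y b.
  by move=> y; move: (free y); rewrite /e' tb eb; apply: contra => /andP[/eqP-> /eqP->]; rewrite !eqxx.
have [l [pl ul ml]] := chain_exists ei np.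
have lm : l \in allseq A #|A|.-1 by apply: allseq_mem; exact: uniq_size ul.
exists (inr (b, SeqSub lm)); rewrite /maxN /= tb eb !eqxx !andbT.
apply/and3P; split.
- rewrite /arrow_path; apply/andP; split; apply: sub_path pl => x y /andP[/eqP h1 /eqP h2] //.
  by rewrite eq_sym h1.
  by rewrite S3 // h2 eqxx.
- by apply/forallP => a; apply: free.
- by apply/forallP => y; move: (ml y); rewrite /e'.
Qed.

Lemma Phi_maxN w : maxN' w -> maxN' (Phi' w).
Proof.
move=> mw; rewrite /Phi /phi /psi.
case: pickP => [x /andP[/andP[mx _] _]|_] /=.
  case: pickP => [y /andP[/andP[my _] _]|none] //=.
  have [|w' /and3P[m1 m2 m3]] := @maxN_exists_tgt (gtgt t x) (~~ tauP tau x).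
    by move: mx => /and3P[_ /forallP h _] a; exact: h.
  by move: (none w'); rewrite m1 m2 m3.
by case: pickP => [y /andP[/andP[my _] _]|_].
Qed.

Lemma orbit_maxN w y : maxN' w -> y \in orbit Phi' w -> maxN' y.
Proof.
move=> mw; rewrite /orbit => /trajectP[i _ ->]; elim: i => //= i IH; exact: Phi_maxN.
Qed.

Definition eb x y := (s y == t x) && (sigma y == tau x).

Lemma eb_fun x y z : eb x y -> eb x z -> y = z.
Proof. by move=> /andP[/eqP h1 /eqP h2] /andP[/eqP h3 /eqP h4]; apply: sinj; rewrite ?h1 ?h2 ?h3 ?h4. Qed.

Lemma last_rev_belast (a : A) l : last (last a l) (rev (belast a l)) = a.
Proof. by case: l => //= y l; rewrite rev_cons last_rcons. Qed.

Lemma maxN_chain a (r : rest A) : maxN' (inr (a, r)) ->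
  path eb (last a (ssval r)) (rev (belast a (ssval r))) /\ forall y, ~~ eb a y.
Proof.
case/and3P => /= /andP[ap rp] /forallP h1 _; split; last first.
  by move=> y; move: (h1 y); rewrite /eb.
rewrite rev_path; have : path [rel x y | (s x == t y) && R x y] a (ssval r) by rewrite path_relI; apply/andP; split.
apply: sub_path => x y /= /andP[/eqP h1' h2]; rewrite /eb h1' eqxx /=.
by rewrite -(S3 h1') h2.
Qed.

Lemma maxN_inj w1 w2 : maxN' w1 -> maxN' w2 -> gsrc s w1 = gsrc s w2 ->
  sgN sigma w1 = sgN sigma w2 -> w1 = w2.
Proof.
case: w1 => [[x1 e1]|[a1 r1]]; case: w2 => [[x2 e2]|[a2 r2]] //=.
- by move=> _ _ -> ->.
- case/and3P => _ /forallP h _ _ h1 h2; move: (h (last a2 (ssval r2))).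
  by rewrite h1 h2 !eqxx.
- move=> _; case/and3P => _ /forallP h _ h1 h2; move: (h (last a1 (ssval r1))).
  by rewrite h1 h2 !eqxx.
move=> m1 m2 h1 h2.
have [p1 t1] := maxN_chain m1; have [p2 t2] := maxN_chain m2.
have el : last a1 (ssval r1) = last a2 (ssval r2) by apply: sinj.
rewrite el in p1.
have e1 : last (last a2 (ssval r2)) (rev (belast a1 (ssval r1))) = a1 by rewrite -el last_rev_belast.
have := chain_unique eb_fun p1 p2; rewrite e1 last_rev_belast => /(_ t1 t2) /(congr1 rev).
rewrite !revK => eb'.
have : a1 :: ssval r1 = a2 :: ssval r2 by rewrite !lastI eb' el.
by case => -> /val_inj ->.
Qed.

Definition Nset : {set gp V A} := [set w | maxN' w].

Lemma count_N : #|Nset| + #|A| <= 2 * #|V|.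
Proof.
pose f1 := fun w : gp V A => (gsrc s w, sgN sigma w).
pose f2 := fun b : A => (t b, tau b).
have c1 : #|f1 @: Nset| = #|Nset|.
  apply: card_in_imset => w1 w2; rewrite !inE => m1 m2 [h1 h2]; exact: maxN_inj.
have c2 : #|f2 @: [set: A]| = #|A|.
  by rewrite card_imset ?cardsT // => b1 b2 [h1 h2]; apply: tinj.
have dj : [disjoint f1 @: Nset & f2 @: [set: A]].
  rewrite disjoints_subset; apply/subsetP => z /imsetP[w]; rewrite inE => mw ->.
  rewrite inE; apply/imsetP => -[b _ [h1 h2]].
  by move: mw => /and3P[_ _ /forallP/(_ b)]; rewrite -h1 -h2 !eqxx.
apply: leq_trans (_ : #|f1 @: Nset| + #|f2 @: [set: A]| <= _); first by rewrite c1 c2.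
have := (leq_card_setU (f1 @: Nset) (f2 @: [set: A])).2.
rewrite dj => /eqP <-.
by rewrite (leq_trans (max_card _)) // card_prod card_bool mulnC.
Qed.

Lemma notC_le : #|~: C'| <= orbit_length Nset.
Proof.
rewrite /orbit_length.
apply: leq_trans (_ : #|\bigcup_(w in Nset) [set a | a \in arrs w]| <= _).
  apply: subset_leq_card; apply/subsetP => a; rewrite !inE negbK => /existsP[w /andP[mw aw]].
  by apply/bigcupP; exists w; rewrite ?inE.
apply: leq_trans (card_bigcup_le _ _) _; apply: leq_sum => w _.
by rewrite cardsE card_size.
Qed.

Lemma C_le : #|C'| <= \sum_(O in PsiOrbits s t R sigma tau) #|O|.
Proof.
apply: leq_trans (card_bigcup_le _ _); apply: subset_leq_card; apply/subsetP => a aC.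
apply/bigcupP; exists [set x in orbit Psi' a]; first by apply/imsetP; exists a.
by rewrite inE in_orbit.
Qed.

Hypothesis Horb3 : forall O, O \in PsiOrbits s t R sigma tau -> #|O| = 3.

Lemma orbit3 x : x \in C' ->
  orbit Psi' x = [:: x; Psi' x; Psi' (Psi' x)] /\ uniq [:: x; Psi' x; Psi' (Psi' x)].
Proof.
move=> xC.
have hO : [set z in orbit Psi' x] \in PsiOrbits s t R sigma tau by apply/imsetP; exists x.
have hord : order Psi' x = 3.
  by rewrite -size_orbit -(Horb3 hO) cardsE; apply/esym/card_uniqP/orbit_uniq.
have ho : orbit Psi' x = [:: x; Psi' x; Psi' (Psi' x)] by rewrite /orbit hord.
by split => //; rewrite -ho orbit_uniq.
Qed.

Lemma Psi_step x : x \in C' -> [/\ Psi' x \in C', t (Psi' x) = s x & tau (Psi' x) = sigma x].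
Proof.
move=> xC; have [_ u] := orbit3 xC.
rewrite /= !inE in u; case/andP: u => /norP[nx _] _.
move: nx; rewrite /Psi; case: pickP => [b /and3P[bC /eqP h1 /eqP h2] _|_]; first by split.
by rewrite eqxx.
Qed.

Lemma Psi_inj x y : x \in C' -> y \in C' -> Psi' x = Psi' y -> x = y.
Proof.
move=> xC yC e; have [_ tx sx] := Psi_step xC; have [_ ty sy] := Psi_step yC.
by apply: sinj; [rewrite -tx -ty e | rewrite -sx -sy e].
Qed.

Lemma Psi3 x : x \in C' -> Psi' (Psi' (Psi' x)) = x.
Proof.
move=> xC; have [ho u] := orbit3 xC.
have [x1C _ _] := Psi_step xC; have [x2C _ _] := Psi_step x1C.
have := looping_order Psi' x; rewrite /looping -size_orbit ho /=.
rewrite !inE => /or3P[/eqP//|/eqP e|/eqP e].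
  have := Psi_inj x2C xC e; move: u => /= /[swap] ->.
  by rewrite !inE eqxx orbT.
have [_ u2] := orbit3 x2C; move: u2; rewrite /= e !inE eqxx.
by [].
Qed.

Lemma orbit_set O y : O \in PsiOrbits s t R sigma tau -> y \in O ->
  y \in C' /\ O = [set y; Psi' y; Psi' (Psi' y)].
Proof.
case/imsetP => x xC -> yO; have [ho _] := orbit3 xC.
have [x1C _ _] := Psi_step xC; have [x2C _ _] := Psi_step x1C.
have h3 := Psi3 xC.
have : [|| y == x, y == Psi' x | y == Psi' (Psi' x)] by move: yO; rewrite inE ho !inE.
rewrite ho; case/or3P => /eqP ->.
- split => //; apply/setP => z; rewrite !inE.
  by case: (z == x); case: (z == Psi' x); case: (z == Psi' (Psi' x)).
- split => //; apply/setP => z; rewrite !inE h3.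
  by case: (z == x); case: (z == Psi' x); case: (z == Psi' (Psi' x)).
- split => //; apply/setP => z; rewrite !inE h3.
  by case: (z == x); case: (z == Psi' x); case: (z == Psi' (Psi' x)).
Qed.

Local Notation Orb := (PsiOrbits s t R sigma tau).

Lemma orbit_eq O1 O2 y : O1 \in Orb -> O2 \in Orb -> y \in O1 -> y \in O2 -> O1 = O2.
Proof.
move=> h1 h2 y1 y2; have [_ ->] := orbit_set h1 y1; by have [_ ->] := orbit_set h2 y2.
Qed.

Lemma orbit_uniq3 O y : O \in Orb -> y \in O -> uniq [:: y; Psi' y; Psi' (Psi' y)].
Proof. by move=> hO yO; have [yC _] := orbit_set hO yO; have [_ u] := orbit3 yC. Qed.

Lemma reps (r : {set A} -> A) : (forall O, O \in Orb -> r O \in O) ->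
  #|r @: Orb| = #|Orb| /\ forall g, g \in r @: Orb ->
     [/\ g \in C', Psi' g \notin r @: Orb & Psi' (Psi' g) \notin r @: Orb].
Proof.
move=> rO; split.
  apply: card_in_imset => O1 O2 h1 h2 e; apply: (orbit_eq h1 h2 (rO _ h1)).
  by rewrite e rO.
move=> g /imsetP[O hO eg]; have gO : g \in O by rewrite eg rO.
have [gC eO] := orbit_set hO gO; have u := orbit_uniq3 hO gO.
split => //; apply/imsetP => -[O' hO' e].
- have : Psi' g \in O by rewrite eO !inE eqxx orbT.
  move=> /(orbit_eq hO hO'); rewrite e => /(_ (rO _ hO')) eO'.
  by move: u; rewrite /= e -eO' -eg !inE eqxx.
- have : Psi' (Psi' g) \in O by rewrite eO !inE eqxx !orbT.
  move=> /(orbit_eq hO hO'); rewrite e => /(_ (rO _ hO')) eO'.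
  by move: u; rewrite /= e -eO' -eg !inE eqxx !orbT.
Qed.

Lemma tri (E : {set A}) a b c : s a = t b -> s b = t c -> s c = t a ->
  connect (adjE s t E) (s b) (t b) -> connect (adjE s t E) (s c) (t c) ->
  connect (adjE s t E) (s a) (t a).
Proof.
move=> e1 e2 e3 cb cc; have sym := sym_connect_sym (@adjE_sym _ _ s t E).
rewrite e1 -e3; apply: connect_trans (_ : connect _ _ (s b)) _; first by rewrite sym.
by rewrite e2 sym.
Qed.

Lemma Psi_tri x : x \in C' -> [/\ s x = t (Psi' x), s (Psi' x) = t (Psi' (Psi' x)) &
   s (Psi' (Psi' x)) = t x].
Proof.
move=> xC; have [x1C t1 _] := Psi_step xC; have [x2C t2 _] := Psi_step x1C.
have [_ t3 _] := Psi_step x2C; by rewrite t1 t2 -t3 Psi3.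
Qed.

Lemma removal (S X : {set A}) : (forall x y, connect (adj s t) x y) -> 0 < #|V| ->
  (forall g, g \in S :|: X -> connect (adjE s t (~: (S :|: X))) (s g) (t g)) ->
  #|V| + #|S :|: X| <= #|A| + 1.
Proof.
move=> c Vp h; have hc := cardsC (S :|: X).
suff : #|V| <= #|~: (S :|: X)| + 1 by lia.
apply: conn_edges Vp; apply: conn_bypass c _ => a; case: (boolP (a \in S :|: X)) => [/h //|na].
by apply: connect1; apply: adjE_arrow; rewrite inE.
Qed.

Hypothesis Hconn : forall x y, connect (adj s t) x y.
Hypothesis Vpos : 0 < #|V|.

Lemma graphA : #|V| + #|Orb| <= #|A| + 1.
Proof.
case: (pickP (@predT A)) => [d _|noA].
  pose r (O : {set A}) := odflt d [pick x in O].
  have rO : forall O, O \in Orb -> r O \in O.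
    move=> O hO; rewrite /r; case: pickP => [x //|none].
    by move: (Horb3 hO); rewrite eq_card0.
  have [cS hS] := reps rO.
  have := @removal (r @: Orb) set0 Hconn Vpos; rewrite setU0 cS; apply => g gS.
  have [gC n1 n2] := hS g gS; have [e1 e2 e3] := Psi_tri gC.
  by apply: (tri (E := ~: (r @: Orb)) e1 e2 e3); apply: connect1; apply: adjE_arrow; rewrite inE.
have -> : #|Orb| = 0.
  apply: eq_card0 => O; apply/negP => hO; move: (Horb3 hO).
  by rewrite eq_card0 // => x; apply/negP => _; move: (noA x).
have := @removal set0 set0 Hconn Vpos; rewrite setU0 cards0 addn0; apply => g.
by rewrite inE.
Qed.

Lemma graphB a0 a1 a2 : is3cycle s t (a0, a1, a2) -> #|A| + 1 <= #|V| + #|Orb| ->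
  exists2 O, O \in Orb & O = [set a0; a1; a2].
Proof.
case/and5P => d01 d12 d20 /eqP c1 /andP[/eqP c2 /eqP c3] hle.
set D := [set a0; a1; a2].
have cD : #|D| = 3.
  rewrite /D -setUA cardsU1 cardsU1 cards1 !inE negb_or d01 eq_sym d20 /=.
  by rewrite d12.
case: (boolP [exists O in Orb, O == D]) => [/existsP[O /andP[hO /eqP eO]]|none].
  by exists O.
exfalso.
pose r (O : {set A}) := odflt a0 [pick x in O :\: D].
have rO : forall O, O \in Orb -> r O \in O :\: D.
  move=> O hO; rewrite /r; case: pickP => [x //|nn].
  have : O \subset D.
    by apply/subsetP => x xO; move: (nn x); rewrite !inE xO andbT => /negbFE.
  move=> sub; move: none => /existsPn/(_ O); rewrite hO /=.
  by rewrite eqEcard sub cD (Horb3 hO).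
have rO' : forall O, O \in Orb -> r O \in O by move=> O /rO; rewrite inE => /andP[].
have [cS hS] := reps rO'.
set S := r @: Orb.
have DS : forall x, x \in D -> x \notin S.
  move=> x xD; apply/imsetP => -[O hO e]; move: (rO O hO); rewrite -e inE xD.
  by [].
have a0S : a0 \notin S by apply: DS; rewrite !inE eqxx.
have helper : forall g, g \notin S -> connect (adjE s t (~: (S :|: [set a0]))) (s g) (t g).
  move=> g gS; case: (eqVneq g a0) => [->|ga]; last first.
    by apply: connect1; apply: adjE_arrow; rewrite !inE negb_or gS ga.
  apply: (tri (E := ~: (S :|: [set a0])) c1 c2 c3); apply: connect1; apply: adjE_arrow.
    by rewrite !inE negb_or DS ?(eq_sym a1) ?d01 // /D !inE eqxx orbT.
  by rewrite !inE negb_or DS ?d20 // /D !inE eqxx !orbT.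
have H : forall g, g \in S :|: [set a0] ->
   connect (adjE s t (~: (S :|: [set a0]))) (s g) (t g).
  move=> g; rewrite inE => /orP[gS|]; last by rewrite inE => /eqP->; apply: helper.
  have [gC n1 n2] := hS g gS; have [e1 e2 e3] := Psi_tri gC.
  by apply: (tri (E := ~: (S :|: [set a0])) e1 e2 e3); apply: helper.
have := @removal S [set a0] Hconn Vpos H.
have cU : #|S :|: [set a0]| = #|Orb| + 1 by rewrite setUC cardsU1 a0S cS addnC.
rewrite cU; lia.
Qed.

Definition hO (O : {set A}) : {set A * A * A} :=
  if [pick x in O] is Some x then rotclass (x, Psi' x, Psi' (Psi' x)) else set0.

Lemma rotclass_rot (c : A * A * A) : rotclass (rot3 c) = rotclass c.
Proof.
case: c => [[a b] d]; apply/setP => z; rewrite /rotclass /rot3 !inE.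
by case: (z == (b, d, a)); case: (z == (d, a, b)); case: (z == (a, b, d)).
Qed.

Lemma hO_spec O : O \in Orb -> exists2 x, x \in O & hO O = rotclass (x, Psi' x, Psi' (Psi' x)).
Proof.
move=> hO'; rewrite /hO; case: pickP => [x xO|none]; first by exists x.
by move: (Horb3 hO'); rewrite eq_card0.
Qed.

Lemma cyc_of x : x \in C' -> is3cycle s t (x, Psi' x, Psi' (Psi' x)).
Proof.
move=> xC; have [_ u] := orbit3 xC; have [e1 e2 e3] := Psi_tri xC.
move: u; rewrite /= !inE negb_or andbT => /andP[/andP[n1 n2] n3].
by rewrite n1 n3 eq_sym n2 e1 e2 e3 !eqxx.
Qed.

Lemma hO_inj : {in Orb &, injective hO}.
Proof.
move=> O1 O2 h1 h2 e.
have [x1 x1O e1] := hO_spec h1; have [x2 x2O e2] := hO_spec h2.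
have [x2C eO2] := orbit_set h2 x2O.
have H : (x1, Psi' x1, Psi' (Psi' x1)) \in rotclass (x2, Psi' x2, Psi' (Psi' x2)).
  by rewrite -e2 -e e1 /rotclass !inE eqxx.
have m : x1 \in O2.
  move: H; rewrite /rotclass /rot3 !inE => /orP[/orP[]|] /eqP [e' _ _];
    by rewrite eO2 e' !inE eqxx ?orbT.
exact: orbit_eq h1 h2 x1O m.
Qed.

Lemma in3 (x a b c : A) : x \in [set a; b; c] -> [\/ x = a, x = b | x = c].
Proof. by rewrite !inE => /orP[/orP[]|] /eqP ?; [apply: Or31|apply: Or32|apply: Or33]. Qed.

Lemma cyc_orbit a0 a1 a2 O : is3cycle s t (a0, a1, a2) -> O \in Orb -> O = [set a0; a1; a2] ->
  rotclass (a0, a1, a2) = hO O.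
Proof.
move=> c3 hO' eO; move: (c3) => /and5P[d01 d12 d20 /eqP c1 /andP[/eqP c2 /eqP c3']].
have a0O : a0 \in O by rewrite eO !inE eqxx.
have [a0C eO0] := orbit_set hO' a0O; have u := orbit_uniq3 hO' a0O.
have [a1C t1 _] := Psi_step a0C; have [a2C t2 _] := Psi_step a1C.
have [_ t3 _] := Psi_step a2C; rewrite Psi3 // in t3.
have p1 : Psi' a0 \in O by rewrite eO0 !inE eqxx orbT.
have p2 : Psi' (Psi' a0) \in O by rewrite eO0 !inE eqxx !orbT.
move: u; rewrite /= !inE negb_or andbT => /andP[/andP[n1 n2] n3].
have [x xO ->] := hO_spec hO'.
have key : Psi' a0 = a1 /\ Psi' (Psi' a0) = a2.
  rewrite eO in p1 p2.
  have [e1|e1|e1] := in3 p1; have [e2|e2|e2] := in3 p2; rewrite ?e2 ?e1 in n1 n2 n3;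
    try (by split); try (by move: n1 n2 n3 d01 d12 d20; rewrite ?eqxx /= ?andbF).
  exfalso.
  have sa02 : s a0 = s a2 by rewrite c1 -e2 t2 e1.
  have sa10 : s a1 = s a0 by rewrite c2 -e1 t1.
  have sa1 := esym sa10; have sa2 := etrans sa10 sa02.
  have h01 := S1 d01 sa1; have h12 := S1 d12 sa2.
  have h20 := S1 d20 (esym (etrans sa1 sa2)).
  by move: h01 h12 h20; case: (sigma a0); case: (sigma a1); case: (sigma a2).
case: key => k1 k2.
have k3 : Psi' a2 = a0 by rewrite -k2 Psi3.
have k2' : Psi' a1 = a2 by rewrite -k1.
rewrite eO in xO; have [->|->|->] := in3 xO.
- by rewrite k1 k2'.
- rewrite k2' k3 -[(a1, a2, a0)]/(rot3 (a0, a1, a2)).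
  by rewrite (rotclass_rot (a0, a1, a2)).
- rewrite k3 k1 -[(a2, a0, a1)]/(rot3 (rot3 (a0, a1, a2))).
  by rewrite (rotclass_rot (rot3 (a0, a1, a2))) (rotclass_rot (a0, a1, a2)).
Qed.

Lemma n3_eq : #|A| + 1 <= #|V| + #|Orb| -> n3cycles s t = #|Orb|.
Proof.
move=> hle; rewrite /n3cycles.
have -> : [set rotclass c | c in [set c | is3cycle s t c]] = hO @: Orb.
  apply/eqP; rewrite eqEsubset; apply/andP; split; apply/subsetP => z.
    case/imsetP => -[[a0 a1] a2]; rewrite inE => c3 ->.
    have [O hO' eO] := graphB c3 hle.
    by rewrite (cyc_orbit c3 hO' eO) imset_f.
  case/imsetP => O hO' ->; have [x xO ->] := hO_spec hO'.
  have [xC _] := orbit_set hO' xO.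
  by apply: imset_f; rewrite inE cyc_of.
exact: card_in_imset hO_inj.
Qed.
End Main.


Theorem proposition8p1 (V A : finType) (s t : A -> V) (R : rel A)
    (sigma tau : A -> bool) (m' p : nat) :
  gentle s t R ->
  sign_ok s t R sigma tau ->
  (forall x y, fAG s t R sigma tau x y = m' * chr 0 3 x y + chr (p + m' + 2) p x y) ->
  let m := n3cycles s t in
  (2 * m + 1 <= #|V|)%N /\
  (forall x y, fAG s t R sigma tau x y =
               m * chr 0 3 x y + chr (#|V| + 1 - m) (#|V| - 1 - 2 * m) x y).
Proof.
move=> [_ [[Vpos conn] _ _ _ _]] [S1 S2 S3] Hf m.
have P0' : (0 == p + m' + 2) = false by rewrite addn2.
have Horb3 : forall O, O \in PsiOrbits s t R sigma tau -> #|O| = 3.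
  move=> O hO; case: (eqVneq #|O| 3) => // ne; exfalso.
  have := Hf 0 #|O|; rewrite /chr (negbTE ne) P0' /= muln0 => h.
  have : 0 < #|[set O' in PsiOrbits s t R sigma tau | #|O'| == #|O|]|.
    by apply/card_gt0P; exists O; rewrite inE hO eqxx.
  by move: h; rewrite /fAG /= mul1n; lia.
have hm' : #|PsiOrbits s t R sigma tau| = m'.
  have := Hf 0 3; rewrite /fAG /chr /= P0'.
  have -> : [set O in PsiOrbits s t R sigma tau | #|O| == 3] = PsiOrbits s t R sigma tau.
    apply/setP => O; rewrite inE; case: (boolP (O \in _)) => // hO.
    by rewrite Horb3 ?eqxx.
  have -> : #|[set O in PhiOrbits s t R sigma tau | (#|O| == 0) && (orbit_length O == 3)]| = 0.
    apply: eq_card0 => O; rewrite inE; apply/negP => /andP[/imsetP[w _ ->] /andP[/eqP c _]].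
    move: c; apply/eqP; rewrite -lt0n; apply/card_gt0P; exists w; by rewrite inE in_orbit.
  lia.
have hPhi : forall O, O \in PhiOrbits s t R sigma tau ->
    #|O| = p + m' + 2 /\ orbit_length O = p.
  move=> O hO.
  have pos : 0 < #|O| by case/imsetP: hO => w _ ->; apply/card_gt0P; exists w; rewrite inE in_orbit.
  case: (boolP ((#|O| == p + m' + 2) && (orbit_length O == p))) => [/andP[/eqP a /eqP b]//|nb].
  exfalso.
  have n0 : (#|O| == 0) = false by apply/negbTE; rewrite -lt0n.
  have := Hf #|O| (orbit_length O); rewrite /fAG /chr (negbTE nb) n0 /= muln0 mul0n !addn0.
  move/eqP; rewrite cards_eq0 => /eqP e0.
  have : O \in set0 by rewrite -e0 inE hO !eqxx.
  by rewrite inE.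
pose S1s := [set O in PhiOrbits s t R sigma tau | (#|O| == p + m' + 2) && (orbit_length O == p)].
have cS1 : #|S1s| = 1.
  have P0 : (p + m' + 2 == 0) = false by rewrite addn2.
  have := Hf (p + m' + 2) p; rewrite /fAG /chr P0 !eqxx /= muln0 mul0n !addn0.
  by rewrite /S1s.
have [Z eZ] : exists Z, S1s = [set Z] by apply/cards1P; rewrite cS1.
have inZ : forall O, O \in PhiOrbits s t R sigma tau -> O = Z.
  move=> O hO; have [a b] := hPhi O hO.
  have : O \in S1s by rewrite inE hO a b !eqxx.
  by rewrite eZ inE => /eqP.
have ZPhi : Z \in PhiOrbits s t R sigma tau.
  have : Z \in S1s by rewrite eZ inE.
  by rewrite inE => /andP[].
have eN : Nset s t R sigma tau = Z.
  apply/setP => w; rewrite inE; apply/idP/idP => [mw|wZ].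
    have hO : [set x in orbit (Phi s t R sigma tau) w] \in PhiOrbits s t R sigma tau.
      by apply/imsetP; exists w; rewrite ?inE.
    by rewrite -(inZ _ hO) inE in_orbit.
  move: ZPhi wZ => /imsetP[w0]; rewrite inE => mw0 ->; rewrite inE.
  exact: orbit_maxN.
have [cN lN] := hPhi Z ZPhi; rewrite -eN in cN lN.
have c1 := count_N S1 S2 S3.
have c2 := notC_le s t R sigma tau.
have c3 := C_le s t R sigma tau.
rewrite (eq_bigr (fun _ => 3)) ?sum_nat_const in c3; last by move=> O hO; exact: Horb3.
have c4 := graphA S1 Horb3 conn Vpos.
have c5 := cardsC (Cset s t R sigma tau).
rewrite hm' in c3 c4.
have hA : #|A| + 1 <= #|V| + #|PsiOrbits s t R sigma tau| by rewrite hm'; lia.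
have hm := n3_eq S1 Horb3 conn Vpos hA.
rewrite /m hm hm'; split; first by lia.
have e1 : #|V| + 1 - m' = p + m' + 2 by lia.
have e2 : #|V| - 1 - 2 * m' = p by lia.
by move=> x y; rewrite Hf e1 e2.
Qed.
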